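(* Let $L=8$ and let $B=2^s\ge 8$. Let $\alpha_0,\dots,\alpha_{B-1}$ be nonzero real LLRs of one list path at a single parity-check (SPC) constituent block, indexed so that $|\alpha_0|<|\alpha_1|<\cdots<|\alpha_{B-1}|$, and let $\beta\in\{0,1\}^B$ with $\beta_j=\frac{1-\mathrm{sgn}(\alpha_j)}{2}$. For an even-weight vector $\hat\beta\in\{0,1\}^B$ (a codeword of the SPC block) define $\Delta(\hat\beta)=\sum_{j=0}^{B-1}|\hat\beta_j-\beta_j|\,|\alpha_j|$. Define a set $\mathcal C$ of 13 even-weight vectors as follows. If $\sum_j\beta_j\equiv 0\pmod 2$: $\mathcal C$ consists of $\beta$; $\beta\oplus e_0\oplus e_t$ for $t=1,\dots,7$; $\beta\oplus e_1\oplus e_2$; $\beta\oplus e_1\oplus e_3$; $\beta\oplus e_1\oplus e_4$; $\beta\oplus e_2\oplus e_3$; $\beta\oplus e_0\oplus e_1\oplus e_2\oplus e_3$. If $\sum_j\beta_j\equiv 1\pmod 2$: $\mathcal C$ consists of $\beta\oplus e_t$ for $t=0,\dots,7$; $\beta\oplus e_0\oplus e_1\oplus e_2$; $\beta\oplus e_0\oplus e_1\oplus e_3$; $\beta\oplus e_0\oplus e_2\oplus e_3$; $\beta\oplus e_1\oplus e_2\oplus e_3$; $\beta\oplus e_0\oplus e_1\oplus e_4$. Then the $L=8$ surviving sub-paths of this path can be obtained from $\mathcal C$: there is a set $S\subseteq\mathcal C$ with $|S|=8$ such that $\Delta(v)\le\Delta(w)$ for all $v\in S$ and all even-weight $w\in\{0,1\}^B\setminus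 S$. Consequently, in one-time path extension of all 8 list paths followed by pruning to the 8 paths of smallest path metric, restricting each path's extensions to these 13 error patterns incurs no loss.
   Context: Setting: successive-cancellation list (SCL) decoding of a polar code with list size $L$. An SPC constituent block of length $B$ is one whose valid outputs are exactly the vectors $\hat\beta\in\{0,1\}^B$ with $\sum_j\hat\beta_j\equiv 0\pmod 2$. Each list path $l$ has a path metric $\mathrm{PM}^l$; extending it by block output $\hat\beta$ gives new path metric $\mathrm{PM}^l+\Delta(\hat\beta)$, and after extension the $L$ extended paths (over all parent paths) with smallest path metric survive. $e_p\in\{0,1\}^B$ has a $1$ in position $p$ (positions indexed $0,\dots,B-1$ in the sorted order above) and $0$ elsewhere; $\oplus$ is componentwise XOR. *)

(* Defs.v *)
From HB Require Import structures.
From mathcomp Require Import all_boot all_order all_algebra.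
Set Implicit Arguments. Unset Strict Implicit. Unset Printing Implicit Defensive.
Import Order.TTheory GRing.Theory Num.Theory.
Local Open Scope ring_scope.

Notation bvec B := {ffun 'I_B -> bool}.

Definition even_weight (B : nat) (v : bvec B) : bool :=
  ~~ odd (\sum_(j < B) (v j : nat))%N.

Definition xorv (B : nat) (u v : bvec B) : bvec B := [ffun j => u j (+) v j].

(* unit vector e_p (p a natural-number position; 0 everywhere if p >= B) *)
Definition evec (B : nat) (p : nat) : bvec B := [ffun j : 'I_B => nat_of_ord j == p].

Definition hard_dec (R : realFieldType) (B : nat) (alpha : 'I_B -> R) : bvec B :=
  [ffun j => alpha j < 0].

Definition Delta (R : realFieldType) (B : nat) (alpha : 'I_B -> R) (v : bvec B) : R :=
  \sum_(j < B) ((v j != hard_dec alpha j)%:R * `|alpha j|).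

Definition candset (R : realFieldType) (B : nat) (alpha : 'I_B -> R) : {set bvec B} :=
  let b := hard_dec alpha in
  let f (ps : seq nat) := foldl (fun v p => xorv v (evec B p)) b ps in
  if even_weight b then
    [set f [::]; f [:: 0; 1]; f [:: 0; 2]; f [:: 0; 3]; f [:: 0; 4];
         f [:: 0; 5]; f [:: 0; 6]; f [:: 0; 7];
         f [:: 1; 2]; f [:: 1; 3]; f [:: 1; 4]; f [:: 2; 3]; f [:: 0; 1; 2; 3]]%N
  else
    [set f [:: 0]; f [:: 1]; f [:: 2]; f [:: 3]; f [:: 4]; f [:: 5]; f [:: 6]; f [:: 7];
         f [:: 0; 1; 2]; f [:: 0; 1; 3]; f [:: 0; 2; 3]; f [:: 1; 2; 3]; f [:: 0; 1; 4]]%N.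

Definition sorted_llrs (R : realFieldType) (B : nat) (alpha : 'I_B -> R) : Prop :=
  (forall j, alpha j != 0) /\
  (forall i j : 'I_B, (nat_of_ord i < nat_of_ord j)%N -> `|alpha i| < `|alpha j|).

(* Main.v *)
Require Import Defs.
From HB Require Import structures.
From mathcomp Require Import all_boot all_order all_algebra.
From mathcomp Require Import zify.
Set Implicit Arguments. Unset Strict Implicit. Unset Printing Implicit Defensive.
Import Order.TTheory GRing.Theory Num.Theory.
Local Open Scope ring_scope.

Lemma exmin (R : realFieldType) (T : finType) (D : {set T}) (f : T -> R) (i0 : T) :
  i0 \in D -> exists2 m, m \in D & forall x, x \in D -> f m <= f x.
Proof.
move=> Hi0.
case: (@arg_minP _ _ _ i0 (mem D) f Hi0) => m Hm Hmin.
by exists m.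
Qed.

Lemma select (R : realFieldType) (T : finType) (A : {set T}) (f : T -> R) (k : nat) :
  (k <= #|A|)%N -> exists S : {set T}, [/\ S \subset A, #|S| = k &
     forall v w, v \in S -> w \in A -> w \notin S -> f v <= f w].
Proof.
elim: k => [|k IH] hk.
  exists set0; split; [exact: sub0set | exact: cards0 | by move=> v w; rewrite inE].
have [S [SA cS HS]] := IH (ltnW hk).
have : (0 < #|A :\: S|)%N by rewrite cardsD (setIidPr SA) cS subn_gt0.
case/card_gt0P => i0 Hi0.
have [m Hm Hmin] := exmin f Hi0.
move: Hm; rewrite inE => /andP [mS mA].
exists (m |: S); split.
- by rewrite subUset sub1set mA SA.
- by rewrite cardsU1 mS cS.
- move=> v w; rewrite !inE => /orP [/eqP -> | vS] wA /norP [wm wS].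
    by apply: Hmin; rewrite inE wS wA.
  exact: HS.
Qed.

Lemma threshold (R : realFieldType) (T : finType) (A S : {set T}) (f : T -> R) (k : nat) v w :
  S \subset A -> #|S| = k ->
  (forall v w, v \in S -> w \in A -> w \notin S -> f v <= f w) ->
  (w \in A \/ (k <= #|[set c in A | (f c <= f w)%R]|)%N) -> w \notin S -> v \in S ->
  f v <= f w.
Proof.
move=> SA cS HS [wA|hD] wS vS; first exact: HS.
set D := [set c in A | (f c <= f w)%R] in hD.
case: (boolP (D \subset S)) => DS.
  have : D == S by rewrite eqEcard DS cS.
  by move/eqP => E; move: vS; rewrite -E inE => /andP [].
case/subsetPn: DS => c; rewrite inE => /andP [cA cw] cS'.
exact: le_trans (HS _ _ vS cA cS') cw.
Qed.

Fixpoint sufs (y : nat -> nat) (m k : nat) : nat :=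
  match k with 0 => 0 | k.+1 => y m + sufs y m.+1 k end%N.

Lemma sufs_sum y m k : sufs y m k = (\sum_(i < k) y (m + i))%N.
Proof.
elim: k m => [|k IH] m /=; first by rewrite big_ord0.
by rewrite big_ord_recl /= addn0 IH; congr (_ + _)%N; apply: eq_bigr => i _; rewrite addnS.
Qed.

Lemma sufs_shift y m k : sufs y m.+1 k = sufs (fun t => y t.+1) m k.
Proof. by elim: k m => [|k IH] m //=; rewrite IH. Qed.

Lemma abel_dec (R : realFieldType) n (y : nat -> nat) (a : nat -> R) :
  \sum_(t < n.+1) (y t)%:R * a t =
  (sufs y 0 n.+1)%:R * a 0 + \sum_(t < n) (y t.+1)%:R * (a t.+1 - a 0).
Proof.
rewrite big_ord_recl /= sufs_sum natrD mulrDl -addrA; congr (_ + _).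
rewrite natr_sum mulr_suml -big_split /=; apply: eq_bigr => i _.
by rewrite -mulrDr addrC subrK.
Qed.

Lemma abel (R : realFieldType) n (y z : nat -> nat) (a : nat -> R) :
  0 <= a 0 -> (forall t, (t.+1 < n)%N -> a t <= a t.+1) ->
  (forall m, (m < n)%N -> (sufs y m (n - m) <= sufs z m (n - m))%N) ->
  \sum_(t < n) (y t)%:R * a t <= \sum_(t < n) (z t)%:R * a t.
Proof.
elim: n y z a => [|n IH] y z a a0 amono hs; first by rewrite !big_ord0.
rewrite !abel_dec; apply: lerD.
  by apply: ler_wpM2r => //; rewrite ler_nat; have := hs 0%N isT; rewrite subn0.
case: n IH amono hs => [|n] IH amono hs; first by rewrite !big_ord0.
apply: (IH (fun t => y t.+1) (fun t => z t.+1) (fun t => a t.+1 - a 0)).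
- by rewrite subr_ge0; apply: amono.
- move=> t ht; rewrite lerD2r; apply: amono; exact: ht.
- move=> m hm; rewrite -!sufs_shift; have := hs m.+1 hm; by rewrite subSS.
Qed.


Definition yc (ps : seq nat) (t : nat) : nat := odd (count_mem t ps).
Definition zx (x : seq bool) (r t : nat) : nat := (nth false x t + (t == 7) * r)%N.
Definition dom ps x r := all (fun m => sufs (yc ps) m (8 - m) <= sufs (zx x r) m (8 - m))%N (iota 0 8).
Definition sig (ps : seq nat) := [seq odd (count_mem t ps) | t <- iota 0 8].
Definition cle : seq (seq nat) := [:: [::]; [:: 0; 1]; [:: 0; 2]; [:: 0; 3]; [:: 0; 4];
         [:: 0; 5]; [:: 0; 6]; [:: 0; 7];
         [:: 1; 2]; [:: 1; 3]; [:: 1; 4]; [:: 2; 3]; [:: 0; 1; 2; 3]]%N.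
Definition clo : seq (seq nat) := [:: [:: 0]; [:: 1]; [:: 2]; [:: 3]; [:: 4]; [:: 5]; [:: 6]; [:: 7];
         [:: 0; 1; 2]; [:: 0; 1; 3]; [:: 0; 2; 3]; [:: 1; 2; 3]; [:: 0; 1; 4]]%N.
Definition Pc cl (par : bool) x r :=
  (odd (count id x + r) != par) || ((r == 0) && (x \in map sig cl)) || (8 <= count (fun ps => dom ps x r) cl)%N.
Fixpoint allseqs k : seq (seq bool) :=
  if k is k'.+1 then [seq b :: x | b <- [:: true; false], x <- allseqs k'] else [:: [::]].
Lemma fin : all (fun x => all (fun r => Pc cle false x r && Pc clo true x r) (iota 0 6)) (allseqs 8).
Proof. vm_compute. reflexivity. Qed.
Lemma fin2 : [&& uniq (map sig cle), uniq (map sig clo), all (all (fun p => p < 8)%N) cle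
  & all (all (fun p => p < 8)%N) clo].
Proof. by vm_compute. Qed.

Lemma allseqsP x : x \in allseqs (size x).
Proof.
elim: x => [|c x IH] //=.
by case: c; rewrite mem_cat; apply/orP; [left|right; rewrite mem_cat; apply/orP; left]; apply: map_f.
Qed.

Definition red (r : nat) : nat := if (r < 6)%N then r else (4 + odd r)%N.
Lemma red_le r : (red r <= r)%N.
Proof. rewrite /red; case: ifP => // /negbT; rewrite -leqNgt; case: (odd r) => /= h; lia. Qed.
Lemma red_odd r : odd (red r) = odd r.
Proof. by rewrite /red; case: ifP => //; case: (odd r). Qed.
Lemma red_lt r : (red r < 6)%N.
Proof. by rewrite /red; case: ifP => //; case: (odd r). Qed.
Lemma red0 r : red r = 0%N -> r = 0%N.
Proof. by rewrite /red; case: ifP => //; case: (odd r). Qed.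

Definition ordB (B : nat) (hB : (8 <= B)%N) (t : nat) : 'I_B := widen_ord hB (inord t : 'I_8).
Lemma ordBK B (hB : (8 <= B)%N) t : (t < 8)%N -> nat_of_ord (ordB hB t) = t.
Proof. by move=> ht; rewrite /= inordK. Qed.

Definition fps (B : nat) (b : bvec B) (ps : seq nat) := foldl (fun v p => xorv v (evec B p)) b ps.
Lemma fpsE B (b : bvec B) ps j : fps b ps j = b j (+) odd (count_mem (nat_of_ord j) ps).
Proof.
elim: ps b => [|p ps IH] b /=; first by rewrite addbF.
rewrite /fps /= -/(fps _ _) IH /xorv /evec !ffunE oddD addbA [p == _]eq_sym.
by case: (_ == p).
Qed.

Lemma split_gen (V : Type) (idx : V) (op : Monoid.com_law idx) B (hB : (8 <= B)%N) (F : 'I_B -> V) :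
  \big[op/idx]_(j < B) F j =
  op (\big[op/idx]_(t < 8) F (ordB hB t)) (\big[op/idx]_(j < B | ~~ (j < 8)%N) F j).
Proof.
rewrite (bigID (fun j : 'I_B => (j < 8)%N)) /= (big_ord_narrow hB); congr (op _ _).
by apply: eq_bigr => t _; congr F; apply: val_inj; rewrite /= inordK.
Qed.


Lemma candE (R : realFieldType) B (alpha : 'I_B -> R) :
  candset alpha = [set v | v \in map (fps (hard_dec alpha))
                     (if even_weight (hard_dec alpha) then cle else clo)].
Proof. by rewrite /candset; case: ifP => _; apply/setP => v; rewrite !inE !orbA. Qed.

Lemma g_fps B (hB : (8 <= B)%N) (b : bvec B) ps :
  [seq (fps b ps (ordB hB t) != b (ordB hB t)) | t <- iota 0 8] = sig ps.
Proof.
apply/eq_in_map => t; rewrite mem_iota => /andP [_ ht].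
by rewrite fpsE ordBK //; case: (b _); case: odd.
Qed.

Lemma uniq_fps B (hB : (8 <= B)%N) (b : bvec B) cl :
  uniq (map sig cl) -> uniq (map (fps b) cl).
Proof.
move=> u; apply: (@map_uniq _ _ (fun v : bvec B => [seq v (ordB hB t) != b (ordB hB t) | t <- iota 0 8])).
by rewrite -map_comp (eq_map (g_fps hB b)).
Qed.

Lemma Delta_fps (R : realFieldType) B (hB : (8 <= B)%N) (alpha : 'I_B -> R) ps :
  all (fun p => p < 8)%N ps ->
  Delta alpha (fps (hard_dec alpha) ps) = \sum_(t < 8) (yc ps t)%:R * `|alpha (ordB hB t)|.
Proof.
move=> hps; rewrite /Delta (split_gen _ hB) /= [X in _ + X]big1 ?addr0.
  apply: eq_bigr => t _; rewrite fpsE ordBK // /yc.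
  by case: (hard_dec _ _); case: odd.
move=> j hj; rewrite fpsE.
have -> : count_mem (nat_of_ord j) ps = 0%N.
  by apply/count_memPn/negP => /(allP hps); rewrite (negbTE hj).
by rewrite addbF eqxx mul0r.
Qed.

Lemma odd_sum (I : finType) (F : I -> nat) :
  odd (\sum_i F i) = \big[addb/false]_i odd (F i).
Proof. have h0 : odd 0 = false by []. by rewrite (big_morph odd oddD h0). Qed.

Lemma parity B (b w : bvec B) :
  odd (\sum_(j < B) (w j : nat)) = odd (\sum_(j < B) (b j : nat)) (+) odd (\sum_(j < B) ((w j != b j) : nat)).
Proof.
rewrite !odd_sum -big_split /=; apply: eq_bigr => j _.
by case: (w j); case: (b j).
Qed.


Lemma zx_sum (R : realFieldType) x r (a : nat -> R) :
  \sum_(t < 8) (zx x r t)%:R * a t = \sum_(t < 8) (nth false x t : nat)%:R * a t + r%:R * a 7%N.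
Proof.
rewrite /zx; under eq_bigr do rewrite natrD mulrDl.
rewrite big_split /=; congr (_ + _).
rewrite (bigD1 (ord_max : 'I_8)) //= big1 ?addr0; first by rewrite mul1n.
by move=> t /negbTE; rewrite -val_eqE /= => ->; rewrite mul0n mul0r.
Qed.

Lemma keyC (R : realFieldType) B (hB : (8 <= B)%N) (alpha : 'I_B -> R) :
  sorted_llrs alpha -> forall w, even_weight w ->
  w \in candset alpha \/
  (8 <= #|[set c in candset alpha | (Delta alpha c <= Delta alpha w)%R]|)%N.
Proof.
move=> [_ hsort] w ew.
set b := hard_dec alpha.
pose a := fun t => `|alpha (ordB hB t)|.
pose y := fun j => w j != b j.
pose r' := (\sum_(j < B | ~~ (j < 8)%N) (y j : nat))%N.
pose x := mkseq (fun t => y (ordB hB t)) 8.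
pose r := red r'.
have hx : size x = 8%N by rewrite size_mkseq.
have xin : x \in allseqs 8 by rewrite -hx allseqsP.
have /andP [fe fo] : Pc cle false x r && Pc clo true x r.
  by apply: (allP (allP fin x xin)); rewrite mem_iota /= add0n red_lt.
have nthx : forall t : 'I_8, nth false x t = y (ordB hB t).
  by move=> t; rewrite nth_mkseq.
have par : odd (count id x + r) = ~~ even_weight b.
  rewrite oddD red_odd -oddD.
  have -> : count id x = (\sum_(t < 8) (y (ordB hB t) : nat))%N.
    rewrite /x /= !big_ord_recr big_ord0 /=.
    rewrite !addnA add0n addn0; congr (_ + _ + _ + _ + _ + _ + _ + _)%N;
    by congr (nat_of_bool (y _)); apply: val_inj.
  rewrite -(split_gen _ hB (fun j => (y j : nat))).
  rewrite /y /even_weight negbK.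
  move: ew; rewrite /even_weight (parity b w).
  by case: (odd (\sum_(j < B) (b j : nat))); case: (odd (\sum_(j < B) ((w j != b j) : nat))).
have mono : forall t, (t.+1 < 8)%N -> a t <= a t.+1.
  move=> t ht; apply: ltW; apply: hsort; rewrite !ordBK //; exact: ltnW.
have Dw : \sum_(t < 8) (nth false x t : nat)%:R * a t + r%:R * a 7%N <= Delta alpha w.
  rewrite /Delta (split_gen _ hB) /=; apply: lerD.
    by apply: ler_sum => t _; rewrite nthx.
  apply: (@le_trans _ _ (r'%:R * a 7%N)).
    by apply: ler_wpM2r; [exact: normr_ge0 | rewrite ler_nat red_le].
  rewrite /r' natr_sum mulr_suml; apply: ler_sum => j hj.
  apply: ler_wpM2l => //; apply: ltW; apply: hsort; rewrite ordBK //.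
  by move: hj; rewrite -leqNgt.
have Dc : forall ps, all (fun p => p < 8)%N ps -> dom ps x r ->
    Delta alpha (fps b ps) <= Delta alpha w.
  move=> ps hps hd; rewrite (Delta_fps hB) //; apply: le_trans Dw.
  rewrite -zx_sum; apply: (@abel _ 8 _ _ a); [exact: normr_ge0 | exact: mono | ].
  by move=> m hm; apply: (allP hd); rewrite mem_iota.
have key : forall cl, (8 <= count (fun ps => dom ps x r) cl)%N ->
    all (all (fun p => p < 8)%N) cl -> uniq (map sig cl) ->
    {subset map (fps b) cl <= candset alpha} ->
    (8 <= #|[set c in candset alpha | (Delta alpha c <= Delta alpha w)%R]|)%N.
  move=> cl hc hall hu hsub.
  pose s := map (fps b) (filter (fun ps => dom ps x r) cl).
  have us : uniq s.
    apply: (uniq_fps hB); apply: subseq_uniq hu.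
    by apply: map_subseq; apply: filter_subseq.
  apply: (leq_trans hc); rewrite -size_filter -(size_map (fps b)).
  have cs : #|s| = size s by apply/card_uniqP.
  rewrite -/s -cs; apply: subset_leq_card; apply/subsetP => c.
  move=> /mapP [ps]; rewrite mem_filter => /andP [hd pin] ->.
  rewrite inE hsub ?map_f //=; apply: Dc => //; exact: (allP hall).
have memw : forall cl ps, ps \in cl -> r = 0%N -> x = sig ps ->
    all (all (fun p => p < 8)%N) cl -> w = fps b ps.
  move=> cl ps pin r0 xs hall; have r'0 := red0 r0.
  have hps := allP hall ps pin.
  apply/ffunP => j; rewrite fpsE.
  have -> : odd (count_mem (nat_of_ord j) ps) = y j.
    case: (ltnP j 8) => hj.
      have -> : j = ordB hB j by apply: val_inj; rewrite /= inordK.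
      rewrite -(nthx (Ordinal hj)) xs /sig (nth_map 0%N) ?size_iota // nth_iota //= add0n inordK //.
    have : (\sum_(j < B | ~~ (j < 8)%N) (y j : nat) == 0)%N by rewrite -/r' r'0.
    rewrite sum_nat_eq0 => /forallP /(_ j); rewrite -leqNgt hj /= => /eqP.
    case: (y j) => //= _.
    have -> : count_mem (nat_of_ord j) ps = 0%N.
      by apply/count_memPn/negP => /(allP hps); rewrite ltnNge hj.
    by [].
  by rewrite /y; case: (w j); case: (b j).
have /and4P [u1 u2 a1 a2] := fin2.
have hC : {subset map (fps b) (if even_weight b then cle else clo) <= candset alpha}.
  by move=> c cin; rewrite candE inE.
move: par hC; case: (even_weight b) => par hC.
- have ha : (odd (count id x + r) != false) = false by rewrite par.
  move: fe; rewrite /Pc ha orFb => /orP [/andP [/eqP r0 hm] | hc].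
    case/mapP: hm => ps pin xs.
    by left; apply: hC; rewrite (memw cle ps) // map_f.
  by right; apply: (key cle hc a1 u1 hC).
- have ha : (odd (count id x + r) != true) = false by rewrite par.
  move: fo; rewrite /Pc ha orFb => /orP [/andP [/eqP r0 hm] | hc].
    case/mapP: hm => ps pin xs.
    by left; apply: hC; rewrite (memw clo ps) // map_f.
  by right; apply: (key clo hc a2 u2 hC).
Qed.


Lemma cardC (R : realFieldType) B (hB : (8 <= B)%N) (alpha : 'I_B -> R) :
  (8 <= #|candset alpha|)%N.
Proof.
rewrite candE; have /and4P [u1 u2 _ _] := fin2.
set cl := if even_weight _ then cle else clo.
have u : uniq (map sig cl) by rewrite /cl; case: ifP.
have uf := uniq_fps hB (hard_dec alpha) u.
rewrite cardsE; have -> : #|map (fps (hard_dec alpha)) cl| = size (map (fps (hard_dec alpha)) cl).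
  by apply/card_uniqP.
by rewrite size_map /cl; case: ifP.
Qed.

Theorem proposition2 (R : realFieldType) (s : nat) (hs : (8 <= 2 ^ s)%N) :
  (* single path: the 8 best even-weight outputs can be taken inside C *)
  (forall alpha : 'I_(2 ^ s) -> R, sorted_llrs alpha ->
     exists S : {set bvec (2 ^ s)},
       [/\ S \subset candset alpha, #|S| = 8%N &
           forall v w : bvec (2 ^ s), v \in S -> even_weight w -> w \notin S ->
             Delta alpha v <= Delta alpha w])
  /\
  (* consequence: list extension of L = 8 paths and pruning to the 8 smallest
     path metrics loses nothing when each path uses only its 13 patterns *)
  (forall (alphas : 'I_8 -> 'I_(2 ^ s) -> R) (PM : 'I_8 -> R),
     (forall l, sorted_llrs (alphas l)) ->
     exists T : {set 'I_8 * bvec (2 ^ s)},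
       [/\ #|T| = 8%N,
           forall l v, (l, v) \in T -> v \in candset (alphas l) &
           forall l v l' w, (l, v) \in T -> even_weight w -> (l', w) \notin T ->
             PM l + Delta (alphas l) v <= PM l' + Delta (alphas l') w]).
Proof.
have hB := hs.
split.
- move=> alpha hal.
  have [S [SA cS HS]] := select (Delta alpha) (cardC hB alpha).
  exists S; split => // v w vS ew wS.
  apply: (@threshold _ _ _ _ (Delta alpha) 8 v w SA cS HS _ wS vS).
  exact: keyC.
- move=> alphas PM hal.
  pose A := [set p : 'I_8 * bvec (2 ^ s) | p.2 \in candset (alphas p.1)].
  pose f := fun p : 'I_8 * bvec (2 ^ s) => PM p.1 + Delta (alphas p.1) p.2.
  have cA : (8 <= #|A|)%N.
    apply: leq_trans (cardC hB (alphas ord0)) _.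
    have inj : injective (fun c : bvec (2 ^ s) => (@ord0 7, c)) by move=> c1 c2 [].
    rewrite -(card_imset (candset (alphas ord0)) inj); apply: subset_leq_card.
    by apply/subsetP => p /imsetP [c cin ->]; rewrite inE.
  have [T [TA cT HT]] := select f cA.
  exists T; split => //.
  + by move=> l v lv; have := subsetP TA _ lv; rewrite inE.
  + move=> l v l' w lv ew lw.
    apply: (@threshold _ _ A T f 8 (l, v) (l', w) TA cT HT _ lw lv).
    case: (keyC hB (hal l') ew) => [win | hD]; [by left; rewrite inE | right].
    apply: leq_trans hD _.
    have inj : injective (fun c : bvec (2 ^ s) => (l', c)) by move=> c1 c2 [].
    rewrite -(card_imset _ inj); apply: subset_leq_card.
    apply/subsetP => p /imsetP [c cD ->]; case/setIdP: cD => cin hle.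
    by rewrite !inE /= cin /f /= lerD2l.
Qed.
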